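(* Let $b(v,s)$ be the Dutch-phase equilibrium bidding function. It is the solution of $$\frac{\partial b(v,s)}{\partial v}=\frac{g(v)}{G(v)}\,\frac{c(s-b(v,s))v-b(v,s)}{1+c'(s-b(v,s))v},\qquad b(0,s)=0,$$ assumed increasing in $v$ and sufficiently smooth that mixed partial derivatives commute. Then $\frac{\partial b(v,s)}{\partial s}<1$ for all relevant $v$ and $s$.
   Context: Values are i.i.d. on $[0,1]$ with twice differentiable CDF $F$ and density $f$; $n\ge2$ bidders. Write $G=F^{n-1}$ and $g=G'$. Time cost: $c:[0,1]\to\mathbb{R}_+$ differentiable with $c(0)=1$ and $c'>-1$, and either $c\equiv1$ or $c'<0$ everywhere. It is also assumed twice differentiable, as the argument uses $c''$. $s\in[0,1]$ is the starting price of an Istanbul Flower Auction. A winner with value $v$ paying $p$ after duration $t$ gets $c(t)v-p$, and the Dutch phase descends from $s$, so its duration is $s-b$. *)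

(* Defs.v *)
From Stdlib Require Import Reals.
From Coquelicot Require Import Coquelicot.
Open Scope R_scope.

(* G = F^(n-1), the CDF of the highest of the other n-1 values. *)
Definition Gof (F : R -> R) (n : nat) (v : R) : R := (F v) ^ (n - 1).
Definition gof (F : R -> R) (n : nat) (v : R) : R := Derive (Gof F n) v.

Definition dutch_rhs (F c : R -> R) (n : nat) (v s x : R) : R :=
  gof F n v / Gof F n v * (c (s - x) * v - x) / (1 + Derive c (s - x) * v).

(* Main.v *)
Require Import Defs.
From Stdlib Require Import Reals Lra Lia.
From Coquelicot Require Import Coquelicot.
Open Scope R_scope.



Lemma cont_eps (f : R -> R) x : ex_derive f x ->
  forall eps, 0 < eps -> exists d, 0 < d /\ forall y, Rabs (y - x) < d -> Rabs (f y - f x) < eps.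
Proof.
  intros Hd eps He.
  assert (Hc := ex_derive_continuous f x Hd).
  apply continuity_pt_filterlim in Hc.
  destruct (Hc eps He) as [d [Hd1 Hd2]].
  exists d; split; auto.
  intros y Hy. destruct (Req_dec y x) as [->|Hne].
  - rewrite Rminus_eq_0, Rabs_R0; auto.
  - apply Hd2. split. unfold D_x, no_cond; split; auto. exact Hy.
Qed.

Lemma deriv_left_eq (f g : R -> R) x l1 l2 d :
  is_derive f x l1 -> is_derive g x l2 -> 0 < d ->
  (forall y, x - d < y <= x -> f y = g y) -> l1 = l2.
Proof.
  intros Hf Hg Hd Heq.
  apply is_derive_Reals in Hf. apply is_derive_Reals in Hg.
  destruct (Req_dec l1 l2) as [E|Hne]; auto. exfalso.
  set (e := Rabs (l1 - l2) / 2).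
  assert (He : 0 < e) by (unfold e; apply Rdiv_lt_0_compat; [apply Rabs_pos_lt; lra|lra]).
  destruct (Hf e He) as [d1 H1]. destruct (Hg e He) as [d2 H2].
  set (hh := - Rmin d (Rmin d1 d2) / 2).
  assert (Hm1 := Rmin_l d (Rmin d1 d2)). assert (Hm2 := Rmin_r d (Rmin d1 d2)).
  assert (Hm3 := Rmin_l d1 d2). assert (Hm4 := Rmin_r d1 d2).
  assert (Hpos : 0 < Rmin d (Rmin d1 d2)).
  { apply Rmin_pos; auto. apply Rmin_pos; [apply (cond_pos d1)|apply (cond_pos d2)]. }
  assert (Hh0 : hh <> 0) by (unfold hh; lra).
  assert (Hha : Rabs hh < d1) by (unfold hh; rewrite Rabs_left; lra).
  assert (Hhb : Rabs hh < d2) by (unfold hh; rewrite Rabs_left; lra).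
  specialize (H1 hh Hh0 Hha). specialize (H2 hh Hh0 Hhb).
  rewrite (Heq (x + hh)) in H1 by (unfold hh; lra).
  rewrite (Heq x) in H1 by lra.
  assert (Rabs (l1 - l2) <= Rabs ((g (x + hh) - g x) / hh - l1) + Rabs ((g (x + hh) - g x) / hh - l2)).
  { replace (l1 - l2) with (- ((g (x + hh) - g x) / hh - l1) + ((g (x + hh) - g x) / hh - l2)) by ring.
    eapply Rle_trans; [apply Rabs_triang|]. rewrite Rabs_Ropp; lra. }
  unfold e in *; lra.
Qed.

Lemma deriv_right_eq (f g : R -> R) x l1 l2 d :
  is_derive f x l1 -> is_derive g x l2 -> 0 < d ->
  (forall y, x <= y < x + d -> f y = g y) -> l1 = l2.
Proof.
  intros Hf Hg Hd Heq.
  apply is_derive_Reals in Hf. apply is_derive_Reals in Hg.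
  destruct (Req_dec l1 l2) as [E|Hne]; auto. exfalso.
  set (e := Rabs (l1 - l2) / 2).
  assert (He : 0 < e) by (unfold e; apply Rdiv_lt_0_compat; [apply Rabs_pos_lt; lra|lra]).
  destruct (Hf e He) as [d1 H1]. destruct (Hg e He) as [d2 H2].
  set (hh := Rmin d (Rmin d1 d2) / 2).
  assert (Hm1 := Rmin_l d (Rmin d1 d2)). assert (Hm2 := Rmin_r d (Rmin d1 d2)).
  assert (Hm3 := Rmin_l d1 d2). assert (Hm4 := Rmin_r d1 d2).
  assert (Hpos : 0 < Rmin d (Rmin d1 d2)).
  { apply Rmin_pos; auto. apply Rmin_pos; [apply (cond_pos d1)|apply (cond_pos d2)]. }
  assert (Hh0 : hh <> 0) by (unfold hh; lra).
  assert (Hha : Rabs hh < d1) by (unfold hh; rewrite Rabs_right; lra).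
  assert (Hhb : Rabs hh < d2) by (unfold hh; rewrite Rabs_right; lra).
  specialize (H1 hh Hh0 Hha). specialize (H2 hh Hh0 Hhb).
  rewrite (Heq (x + hh)) in H1 by (unfold hh; lra).
  rewrite (Heq x) in H1 by lra.
  assert (Rabs (l1 - l2) <= Rabs ((g (x + hh) - g x) / hh - l1) + Rabs ((g (x + hh) - g x) / hh - l2)).
  { replace (l1 - l2) with (- ((g (x + hh) - g x) / hh - l1) + ((g (x + hh) - g x) / hh - l2)) by ring.
    eapply Rle_trans; [apply Rabs_triang|]. rewrite Rabs_Ropp; lra. }
  unfold e in *; lra.
Qed.

Lemma deriv_nonneg_left (f : R -> R) x l d :
  is_derive f x l -> 0 < d -> (forall y, x - d < y <= x -> f y <= f x) -> 0 <= l.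
Proof.
  intros Hf Hd Hm. apply is_derive_Reals in Hf.
  destruct (Rle_lt_dec 0 l) as [|Hl]; auto. exfalso.
  assert (He : 0 < - l / 2) by lra.
  destruct (Hf (-l/2) He) as [d1 H1].
  set (hh := - Rmin d d1 / 2).
  assert (Hm1 := Rmin_l d d1). assert (Hm2 := Rmin_r d d1).
  assert (Hpos : 0 < Rmin d d1) by (apply Rmin_pos; [auto|apply (cond_pos d1)]).
  assert (Hh0 : hh <> 0) by (unfold hh; lra).
  assert (Hha : Rabs hh < d1) by (unfold hh; rewrite Rabs_left; lra).
  specialize (H1 hh Hh0 Hha).
  assert (Hq : 0 <= (f (x + hh) - f x) / hh).
  { unfold Rdiv. replace ((f (x + hh) - f x) * / hh) with ((f x - f (x+hh)) * / (- hh))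
      by (field; auto).
    apply Rmult_le_pos. assert (f (x+hh) <= f x) by (apply Hm; unfold hh; lra). lra.
    left; apply Rinv_0_lt_compat; unfold hh; lra. }
  apply Rabs_lt_between in H1. lra.
Qed.

Lemma mono_le (f : R -> R) a b : a < b ->
  (forall x, a <= x <= b -> ex_derive f x) ->
  (forall x, a < x < b -> 0 <= Derive f x) -> f a <= f b.
Proof.
  intros Hab Hd Hp.
  destruct (MVT_cor2 f (Derive f) a b Hab) as [c [Hc1 Hc2]].
  - intros c Hc. apply is_derive_Reals. apply Derive_correct. auto.
  - specialize (Hp c Hc2). nra.
Qed.

Lemma isd_mult (f g : R -> R) x df dg : is_derive f x df -> is_derive g x dg ->
  is_derive (fun t => f t * g t) x (df * g x + f x * dg).
Proof. intros. apply (is_derive_mult f g x df dg); auto. intros; apply Rmult_comm. Qed.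
Lemma isd_plus (f g : R -> R) x df dg : is_derive f x df -> is_derive g x dg ->
  is_derive (fun t => f t + g t) x (df + dg).
Proof. intros. apply (is_derive_plus f g x df dg); auto. Qed.
Lemma isd_minus (f g : R -> R) x df dg : is_derive f x df -> is_derive g x dg ->
  is_derive (fun t => f t - g t) x (df - dg).
Proof. intros. apply (is_derive_minus f g x df dg); auto. Qed.
Lemma isd_comp (f g : R -> R) x df dg : is_derive f (g x) df -> is_derive g x dg ->
  is_derive (fun t => f (g t)) x (dg * df).
Proof. intros. apply (is_derive_comp f g x df dg); auto. Qed.
Lemma isd_const (a x : R) : is_derive (fun _ => a) x 0.
Proof. apply (is_derive_const a x). Qed.
Lemma isd_id (x : R) : is_derive (fun t => t) x 1.
Proof. apply (is_derive_id x). Qed.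
Lemma isd_eq (f : R -> R) x l1 l2 : is_derive f x l1 -> l1 = l2 -> is_derive f x l2.
Proof. intros H ->; auto. Qed.

Lemma rhs_deriv (b : R -> R -> R) (c : R -> R) x s A :
  ex_derive (fun t => b x t) s -> ex_derive c (s - b x s) -> ex_derive (Derive c) (s - b x s) ->
  1 + Derive c (s - b x s) * x <> 0 ->
  is_derive (fun t => A * (c (t - b x t) * x - b x t) / (1 + Derive c (t - b x t) * x)) s
   (A * ((Derive c (s - b x s) * (1 - Derive (fun t => b x t) s) * x - Derive (fun t => b x t) s) * (1 + Derive c (s - b x s) * x)
     - (c (s - b x s) * x - b x s) * (Derive (Derive c) (s - b x s) * (1 - Derive (fun t => b x t) s) * x))
    / (1 + Derive c (s - b x s) * x)^2).
Proof.
  intros. auto_derive.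
  all: try (repeat split; auto).
  unfold Rminus in *. change (fun x0:R => c x0) with c. change (fun x0:R => Derive c x0) with (Derive c). field. auto.
Qed.

Lemma clamp_lip a b' x y : a <= b' -> Rabs (Rmax a (Rmin y b') - Rmax a (Rmin x b')) <= Rabs (y - x).
Proof.
  intros Hab. unfold Rmax, Rmin.
  repeat destruct Rle_dec; unfold Rabs; repeat destruct Rcase_abs; lra.
Qed.

Theorem lemma2
  (n : nat) (F c : R -> R) (b : R -> R -> R)
  (* n >= 2 bidders *)
  (Hn : (2 <= n)%nat)
  (* F : CDF on [0,1], twice differentiable; f = F' *)
  (HF0 : F 0 = 0) (HF1 : F 1 = 1)
  (HFmono : forall x y, 0 <= x -> x <= y -> y <= 1 -> F x <= F y)
  (HFd : forall x, 0 <= x <= 1 -> ex_derive F x /\ ex_derive (Derive F) x)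
  (* time cost c : [0,1] -> R_+, twice differentiable, c(0)=1, c' > -1,
     and either c = 1 or c' < 0 everywhere on [0,1] *)
  (Hcnn : forall t, 0 <= t <= 1 -> 0 <= c t)
  (Hcd : forall t, 0 <= t <= 1 -> ex_derive c t /\ ex_derive (Derive c) t)
  (Hc0 : c 0 = 1)
  (Hc' : forall t, 0 <= t <= 1 -> -1 < Derive c t)
  (Hcase : (forall t, 0 <= t <= 1 -> c t = 1) \/
           (forall t, 0 <= t <= 1 -> Derive c t < 0))
  (* b is smooth enough: partials exist and mixed partials commute *)
  (Hsmooth : forall v s, 0 <= v <= 1 -> 0 <= s <= 1 ->
     ex_derive (fun w => b w s) v /\
     ex_derive (fun t => b v t) s /\
     ex_derive (fun t => Derive (fun w => b w t) v) s /\
     ex_derive (fun w => Derive (fun t => b w t) s) v /\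
     Derive (fun t => Derive (fun w => b w t) v) s =
     Derive (fun w => Derive (fun t => b w t) s) v)
  (* initial condition *)
  (Hb0 : forall s, 0 <= s <= 1 -> b 0 s = 0)
  (* b is increasing in v *)
  (Hinc : forall s v w, 0 <= s <= 1 -> 0 <= v -> v < w -> w <= 1 ->
     b v s < b w s)
  (* the Dutch-phase ODE (where the Dutch phase is relevant: b(v,s) <= s) *)
  (Hode : forall v s, 0 < v <= 1 -> 0 <= s <= 1 -> b v s <= s ->
     Derive (fun w => b w s) v = dutch_rhs F c n v s (b v s)) :
  forall v s, 0 <= v <= 1 -> 0 <= s <= 1 -> b v s <= s ->
    Derive (fun t => b v t) s < 1.
Proof.
  intros v s Hv Hs Hbs.
  assert (Hh0 : forall s', 0 <= s' <= 1 -> Derive (fun t => b 0 t) s' = 0).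
  { intros s' Hs'. destruct (Hsmooth 0 s' ltac:(lra) Hs') as [_ [Hd _]].
    assert (HD := Derive_correct _ _ Hd).
    destruct (Rlt_or_le 0 s') as [Hp|Hz].
    - apply (deriv_left_eq _ (fun _ => 0) s' _ 0 s' HD (isd_const 0 s') Hp).
      intros y Hy. apply Hb0; lra.
    - apply (deriv_right_eq _ (fun _ => 0) s' _ 0 1 HD (isd_const 0 s') ltac:(lra)).
      intros y Hy. apply Hb0; lra. }
  destruct (Req_dec v 0) as [->|Hv0]. { rewrite Hh0 by lra. lra. }
  assert (Hvp : 0 < v) by lra.
  assert (Hbvs : 0 < b v s) by (rewrite <- (Hb0 s Hs); apply Hinc; lra).
  assert (Hsp : 0 < s) by lra.
  assert (Hbrange : forall w, 0 <= w <= v -> 0 <= b w s <= b v s).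
  { intros w Hw. destruct (Req_dec w 0) as [->|]. rewrite Hb0; lra.
    split. rewrite <- (Hb0 s Hs). left; apply Hinc; lra.
    destruct (Req_dec w v) as [->|]; [lra|]. left; apply Hinc; lra. }
  assert (Hblt : forall w, 0 <= w < v -> b w s < s).
  { intros w Hw. destruct (Req_dec w 0) as [->|]. rewrite Hb0; lra.
    assert (b w s < b v s) by (apply Hinc; lra). lra. }
  assert (HGd : forall x, 0 <= x <= 1 -> is_derive (Gof F n) x (gof F n x)).
  { intros x Hx. unfold gof. apply Derive_correct. unfold Gof.
    destruct (HFd x Hx) as [[l Hl] _]. eexists. apply is_derive_pow. exact Hl. }
  assert (HFnn : forall x, 0 <= x <= 1 -> 0 <= F x).
  { intros x Hx. rewrite <- HF0. apply HFmono; lra. }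
  assert (HFpos : forall x, 0 < x <= v -> 0 < F x).
  { intros x Hx. destruct (Rlt_or_le 0 (F x)) as [|HF]; auto. exfalso.
    assert (HF0x : forall y, 0 <= y <= x -> F y = 0).
    { intros y Hy. assert (F 0 <= F y) by (apply HFmono; lra).
      assert (F y <= F x) by (apply HFmono; lra). lra. }
    assert (Hg0 : forall y, 0 < y < x -> gof F n y = 0).
    { intros y Hy. apply (deriv_left_eq (Gof F n) (fun _ => 0) y _ 0 y (HGd y ltac:(lra)) (isd_const 0 y) ltac:(lra)).
      intros z Hz. unfold Gof. rewrite HF0x by lra. apply pow_i. lia. }
    assert (Hle : (fun w => - b w s) 0 <= (fun w => - b w s) x).
    { apply (mono_le (fun w => - b w s) 0 x); [lra| |].
      - intros y Hy. apply (ex_derive_opp (fun w => b w s)). apply (Hsmooth y s); lra.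
      - intros y Hy. rewrite Derive_opp. rewrite Hode by (try lra; left; apply Hblt; lra).
        unfold dutch_rhs. rewrite Hg0 by lra. unfold Rdiv. rewrite !Rmult_0_l. lra. }
    simpl in Hle. rewrite Hb0 in Hle by lra.
    assert (b 0 s < b x s) by (apply Hinc; lra). rewrite Hb0 in H by lra. lra. }
  assert (HGpos : forall x, 0 < x <= v -> 0 < Gof F n x).
  { intros; unfold Gof; apply pow_lt; auto. }
  assert (Hgnn : forall x, 0 < x < v -> 0 <= gof F n x).
  { intros x Hx. apply (deriv_nonneg_left (Gof F n) x _ x (HGd x ltac:(lra)) ltac:(lra)).
    intros y Hy. unfold Gof. apply pow_incr. split. apply HFnn; lra. apply HFmono; lra. }
  assert (HDpos : forall w, 0 <= w <= v -> 0 < 1 + Derive c (s - b w s) * w).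
  { intros w Hw. assert (Hb := Hbrange w Hw). assert (Hc := Hc' (s - b w s) ltac:(lra)).
    destruct (Req_dec w 0) as [->|]. lra.
    assert (0 < w * (1 + Derive c (s - b w s))) by (apply Rmult_lt_0_compat; lra). nra. }
  destruct (Hsmooth 0 s ltac:(lra) Hs) as [_ [_ [_ [Hh0d _]]]].
  destruct (cont_eps _ _ Hh0d (1/2) ltac:(lra)) as [d0 [Hd0 Hd0']].
  set (w1 := Rmin d0 v / 2).
  assert (Hw1 : 0 < w1 < v).
  { unfold w1. assert (Hm1 := Rmin_l d0 v). assert (Hm2 := Rmin_r d0 v).
    assert (0 < Rmin d0 v) by (apply Rmin_pos; lra). lra. }
  assert (Hu1 : Derive (fun t => b w1 t) s < 1/2).
  { assert (Rabs (w1 - 0) < d0).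
    { unfold w1. assert (Hm1 := Rmin_l d0 v). 
      assert (0 < Rmin d0 v) by (apply Rmin_pos; lra). rewrite Rminus_0_r, Rabs_right; lra. }
    specialize (Hd0' w1 H). simpl in Hd0'. rewrite (Hh0 s Hs) in Hd0'.
    apply Rabs_lt_between in Hd0'. lra. }

  assert (Hbd : forall x, 0 <= x <= 1 -> is_derive (fun w => b w s) x (Derive (fun w => b w s) x)).
  { intros x Hx. apply Derive_correct. apply (Hsmooth x s Hx Hs). }
  assert (Hc1d : forall x, 0 <= x <= v -> is_derive (fun w => Derive c (s - b w s)) x
      ((0 - Derive (fun w => b w s) x) * Derive (Derive c) (s - b x s))).
  { intros x Hx. apply (isd_comp (Derive c) (fun w => s - b w s)).
    - apply Derive_correct. apply (Hcd (s - b x s)). assert (Hb := Hbrange x Hx). lra.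
    - apply isd_minus. apply isd_const. apply Hbd; lra. }
  assert (HDd : forall x, 0 <= x <= v -> is_derive (fun w => 1 + Derive c (s - b w s) * w) x
      (0 + ((0 - Derive (fun w => b w s) x) * Derive (Derive c) (s - b x s) * x + Derive c (s - b x s) * 1))).
  { intros x Hx. apply isd_plus. apply isd_const. apply (isd_mult (fun w => Derive c (s - b w s)) (fun w => w)).
    apply Hc1d; auto. apply isd_id. }
  set (k := fun x => Derive c (s - b x s) / (1 + Derive c (s - b x s) * x)).
  assert (Hkc : forall x, w1 <= x <= v -> continuous k x).
  { intros x Hx. apply (@ex_derive_continuous R_AbsRing R_NormedModule k x). eexists.
    apply (is_derive_div (fun w => Derive c (s - b w s)) (fun w => 1 + Derive c (s - b w s) * w)).
    apply Hc1d; lra. apply HDd; lra. assert (HH := HDpos x ltac:(lra)). lra. }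
  set (cl := fun x => Rmax w1 (Rmin x v)).
  assert (Hcl : forall x, w1 <= cl x <= v).
  { intros x. unfold cl. split. apply Rmax_l. apply Rmax_lub. lra. apply Rmin_r. }
  assert (Hclc : forall x, continuous cl x).
  { intros x. apply continuity_pt_filterlim. intros eps Heps. exists eps. split; auto.
    intros y [_ Hy]. unfold R_dist in *. eapply Rle_lt_trans; [apply clamp_lip|]. lra. auto. }
  set (kt := fun x => k (cl x)).
  assert (Hktc : forall x, continuous kt x).
  { intros x. unfold kt. apply (continuous_comp cl k). auto. apply Hkc. auto. }
  assert (HRI : forall y, is_RInt kt w1 y (RInt kt w1 y)).
  { intros y. apply (@RInt_correct R_CompleteNormedModule kt w1 y). apply (@ex_RInt_continuous R_CompleteNormedModule kt w1 y). intros; auto. }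
  set (E := fun x => exp (- RInt kt w1 x)).
  assert (HE : forall x, is_derive E x (- kt x * E x)).
  { intros x. unfold E. apply (isd_comp exp (fun y => - RInt kt w1 y)).
    apply is_derive_exp. apply (is_derive_opp (fun y => RInt kt w1 y)).
    apply (is_derive_RInt kt (fun y => RInt kt w1 y) w1). apply filter_forall. auto. auto. }
  assert (HEpos : forall x, 0 < E x) by (intros; apply exp_pos).

  assert (Hhw : forall x, w1 < x < v -> Derive (fun w => Derive (fun t => b w t) s) x =
     gof F n x / Gof F n x * ((Derive c (s - b x s) * (1 - Derive (fun t => b x t) s) * x - Derive (fun t => b x t) s) * (1 + Derive c (s - b x s) * x)
     - (c (s - b x s) * x - b x s) * (Derive (Derive c) (s - b x s) * (1 - Derive (fun t => b x t) s) * x))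
    / (1 + Derive c (s - b x s) * x)^2).
  { intros x Hx. destruct (Hsmooth x s ltac:(lra) Hs) as [Hbx [Hbt [Hphi [_ Hmix]]]].
    rewrite <- Hmix.
    assert (Hlt : b x s < s) by (apply Hblt; lra).
    assert (Hb := Hbrange x ltac:(lra)).
    destruct (cont_eps _ _ Hbt ((s - b x s)/2) ltac:(lra)) as [d1 [Hd1 Hd1']].
    assert (Hm1 := Rmin_l d1 (Rmin ((s - b x s)/2) s)).
    assert (Hm2 := Rmin_r d1 (Rmin ((s - b x s)/2) s)).
    assert (Hm3 := Rmin_l ((s - b x s)/2) s). assert (Hm4 := Rmin_r ((s - b x s)/2) s).
    assert (Hmp : 0 < Rmin d1 (Rmin ((s - b x s)/2) s)).
    { apply Rmin_pos; auto. apply Rmin_pos; lra. }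
    apply (deriv_left_eq _ (fun t => dutch_rhs F c n x t (b x t)) s _ _ (Rmin d1 (Rmin ((s - b x s)/2) s)) (Derive_correct _ _ Hphi)).
    - unfold dutch_rhs. apply rhs_deriv; auto.
      apply (Hcd (s - b x s)); lra. apply (Hcd (s - b x s)); lra.
      assert (HH := HDpos x ltac:(lra)). lra.
    - auto.
    - intros t Ht. apply Hode; try lra.
      assert (Rabs (t - s) < d1) by (rewrite Rabs_left1; lra).
      specialize (Hd1' t H). apply Rabs_lt_between in Hd1'. lra. }
  set (P := fun w => (1 - Derive (fun t => b w t) s) * Gof F n w * (1 + Derive c (s - b w s) * w) * E w).
  assert (HPis : forall x, w1 <= x <= v -> is_derive P x
     ((((0 - Derive (fun w => Derive (fun t => b w t) s) x) * Gof F n x + (1 - Derive (fun t => b x t) s) * gof F n x)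
        * (1 + Derive c (s - b x s) * x)
       + (1 - Derive (fun t => b x t) s) * Gof F n x *
         (0 + ((0 - Derive (fun w => b w s) x) * Derive (Derive c) (s - b x s) * x + Derive c (s - b x s) * 1)))
      * E x
      + (1 - Derive (fun t => b x t) s) * Gof F n x * (1 + Derive c (s - b x s) * x) * (- kt x * E x))).
  { intros x Hx. unfold P.
    apply (isd_mult (fun w => (1 - Derive (fun t => b w t) s) * Gof F n w * (1 + Derive c (s - b w s) * w)) E); [|apply HE].
    apply (isd_mult (fun w => (1 - Derive (fun t => b w t) s) * Gof F n w) (fun w => 1 + Derive c (s - b w s) * w)); [|apply HDd; lra].
    apply (isd_mult (fun w => (1 - Derive (fun t => b w t) s)) (Gof F n)); [|apply HGd; lra].
    apply (isd_minus (fun _ => 1) (fun w => Derive (fun t => b w t) s)). apply isd_const.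
    apply Derive_correct. apply (Hsmooth x s); lra. }
  assert (HPD : forall x, w1 < x < v -> 0 <= Derive P x).
  { intros x Hx. rewrite (is_derive_unique _ _ _ (HPis x ltac:(lra))).
    rewrite Hhw by lra. rewrite Hode by (try lra; left; apply Hblt; lra).
    assert (Hkt : kt x = k x).
    { unfold kt, cl. rewrite Rmin_left by lra. rewrite Rmax_right by lra. auto. }
    rewrite Hkt. unfold k, dutch_rhs.
    assert (HG := HGpos x ltac:(lra)). assert (HD := HDpos x ltac:(lra)).
    replace (_ + _) with (gof F n x * E x).
    - apply Rmult_le_pos. apply Hgnn; lra. left; auto.
    - field. lra. }

  assert (HPle : P w1 <= P v).
  { apply (mono_le P w1 v); [lra| |auto]. intros x Hx. eexists. apply HPis; auto. }
  assert (HPw1 : 0 < P w1).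
  { unfold P. assert (HG := HGpos w1 ltac:(lra)). assert (HD := HDpos w1 ltac:(lra)).
    assert (HE1 := HEpos w1).
    apply Rmult_lt_0_compat; auto. apply Rmult_lt_0_compat; auto. apply Rmult_lt_0_compat; auto. lra. }
  assert (HG := HGpos v ltac:(lra)). assert (HD := HDpos v ltac:(lra)). assert (HEv := HEpos v).
  unfold P in HPle, HPw1. cbv beta in HPle, HPw1.
  destruct (Rlt_or_le (Derive (fun t => b v t) s) 1) as [|Hge]; auto. exfalso.
  assert (0 <= (Derive (fun t => b v t) s - 1) * Gof F n v * (1 + Derive c (s - b v s) * v) * E v).
  { apply Rmult_le_pos; [|lra]. apply Rmult_le_pos; [|lra]. apply Rmult_le_pos; lra. }
  assert (HH : (Derive (fun t => b v t) s - 1) * Gof F n v * (1 + Derive c (s - b v s) * v) * E v =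
    - ((1 - Derive (fun t => b v t) s) * Gof F n v * (1 + Derive c (s - b v s) * v) * E v)) by ring.
  lra.
Qed.
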